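(* Let $\epsilon>0$, let $s\ge 2$ be an integer, and let $0<p<\frac{s-1}{s}$. Then there exists $t=t(\epsilon,s,p)$ with the following property. For every $n$ and every $s$-wise $t$-intersecting family $\mathcal F\subseteq 2^{[n]}$, we have $\mu_p(\mathcal F)<\epsilon$.
   Context: Here $[n]=\{0,1,\dots,n-1\}$ and $2^{[n]}$ is the set of all subsets of $[n]$. A family $\mathcal F\subseteq 2^{[n]}$ is $s$-wise $t$-intersecting if $|F_1\cap\cdots\cap F_s|\ge t$ for every $F_1,\dots,F_s\in\mathcal F$. For $F\subseteq[n]$ define $\mu_p(F)=p^{|F|}(1-p)^{n-|F|}$, and for a family define $\mu_p(\mathcal F)=\sum_{F\in\mathcal F}\mu_p(F)$. Equivalently, $\mu_p(\mathcal F)$ is the probability that a random subset of $[n]$, containing each element independently with probability $p$, lies in $\mathcal F$. *)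

(* Defs.v *)
From mathcomp Require Import all_boot all_order all_algebra.
From mathcomp Require Import reals.
Set Implicit Arguments. Unset Strict Implicit. Unset Printing Implicit Defensive.
Import Order.TTheory GRing.Theory Num.Theory.
Local Open Scope ring_scope.

(* [n] = 'I_n ; subsets of [n] are {set 'I_n}; families are {set {set 'I_n}}. *)

(* F is s-wise t-intersecting: for every F_1,...,F_s in F (repetitions allowed),
   |F_1 ∩ ... ∩ F_s| >= t. *)
Definition swise_tintersecting (n s t : nat) (F : {set {set 'I_n}}) : Prop :=
  forall G : 'I_s -> {set 'I_n}, (forall i, G i \in F) ->
    (t <= #|\bigcap_(i < s) G i|)%N.

Definition mu_set (R : nzRingType) (n : nat) (p : R) (A : {set 'I_n}) : R :=
  p ^+ #|A| * (1 - p) ^+ (n - #|A|).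

Definition mu (R : nzRingType) (n : nat) (p : R) (F : {set {set 'I_n}}) : R :=
  \sum_(A in F) mu_set p A.

(* Main.v *)
Require Import Defs.
From mathcomp Require Import all_boot all_order all_algebra.
From mathcomp Require Import reals.
From mathcomp Require Import zify ring lra.
From Stdlib Require Import FunctionalExtensionality.
Set Implicit Arguments. Unset Strict Implicit. Unset Printing Implicit Defensive.
Import Order.TTheory GRing.Theory Num.Theory.
Section Comb.
Variables (n s : nat).
Implicit Types (F : {set {set 'I_n}}) (A B : {set 'I_n}).

Definition bnd k F := forall A, A \in F -> forall y : 'I_n, y \in A -> (y < k)%N.
Definition shifted k F := forall A, A \in F -> forall i j : 'I_n,
  (i < j)%N -> (j < k)%N -> i \in A -> j \notin A -> j |: (A :\ i) \in F.

Lemma F0_claim k (hk : (k < n)%N) F t :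
  bnd k.+1 F -> shifted k.+1 F -> swise_tintersecting s t F -> (0 < t)%N ->
  forall c (G : 'I_s -> {set 'I_n}), (forall i, G i \in F) ->
   #|[set i | Ordinal hk \notin G i]| = c.+1 ->
   (t + c <= #|\bigcap_(i < s) G i|)%N.
Proof.
move=> hb hsh hsw ht c; elim: c => [|c IH] G hG hc.
  by rewrite addn0; apply: hsw.
set x := Ordinal hk in hc *.
set S := [set i | x \notin G i] in hc.
have /set0Pn [i0 i0S] : S != set0 by rewrite -card_gt0 hc.
have hI := hsw G hG.
have /set0Pn [j jI] : \bigcap_(i < s) G i != set0.
  by rewrite -card_gt0; apply: leq_trans hI.
have jG : forall i, j \in G i by move=> i; move/bigcapP: jI; apply.
have xi0 : x \notin G i0 by move: i0S; rewrite inE.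
have jx : (j < x)%N.
  have := hb _ (hG i0) _ (jG i0); rewrite ltnS leq_eqVlt => /orP[|//].
  move=> /eqP jx; exfalso; move: xi0; suff -> : x = j by rewrite jG.
  by apply: val_inj.
pose G' i := if i == i0 then x |: (G i0 :\ j) else G i.
have hG' : forall i, G' i \in F.
  move=> i; rewrite /G'; case: eqP => _ //.
  by apply: hsh => //; rewrite (hG i0) /=.
have cD := cardsD1 i0 S; rewrite i0S hc add1n in cD; case: cD => cD.
have hc' : #|[set i | x \notin G' i]| = c.+1.
  rewrite cD; apply: eq_card => i; rewrite !inE /G'.
  case: (eqVneq i i0) => [->|_] //=; by rewrite setU11.
have /set0Pn [i1 i1S] : S :\ i0 != set0 by rewrite -card_gt0 -cD.
move: i1S; rewrite !inE => /andP[i1i0 xi1].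
have := IH G' hG' hc'.
have sub : \bigcap_(i < s) G' i \subset (\bigcap_(i < s) G i) :\ j.
  apply/subsetP => y /bigcapP yG.
  have := yG i0 isT; rewrite /G' eqxx !inE => /orP[/eqP yx|/andP[yj yGi0]].
    by move: (yG i1 isT); rewrite /G' (negbTE i1i0) yx (negbTE xi1).
  rewrite yj /=; apply/bigcapP => i _.
  have := yG i isT; rewrite /G'; case: eqP => [->|//].
  by move=> _; exact: yGi0.
have := subset_leq_card sub.
have := cardsD1 j (\bigcap_(i < s) G i); rewrite jI add1n.
move=> H1 H2 H3; rewrite H1 addnS ltnS; exact: leq_trans H3 H2.
Qed.


Definition mv (i j : 'I_n) F A := [&& i \in A, j \notin A & j |: (A :\ i) \notin F].
Definition sh (i j : 'I_n) F A := if mv i j F A then j |: (A :\ i) else A.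
Definition SF i j F := [set sh i j F A | A in F].

Lemma sh_mem i j F A y : (y != i) -> (y != j) -> (y \in sh i j F A) = (y \in A).
Proof. by move=> yi yj; rewrite /sh; case: ifP => // _; rewrite !inE (negbTE yi) (negbTE yj). Qed.

Lemma mv_ij i j F A : mv i j F A -> (i \in A) && (j \notin A) && (i != j).
Proof.
case/and3P=> iA jA _; rewrite iA jA /=; apply/eqP => e; by move: jA; rewrite -e iA.
Qed.

Lemma sh_card i j F A : #|sh i j F A| = #|A|.
Proof.
rewrite /sh; case: ifP => // /mv_ij /andP[/andP[iA jA] ij].
rewrite cardsU1 (cardsD1 i A) iA !inE negb_and negbK jA orbT.
by rewrite add1n.
Qed.

Lemma sh_inj i j F : {in F &, injective (sh i j F)}.
Proof.
move=> A B AF BF; rewrite /sh.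
case: ifP => hA; case: ifP => hB //.
- move=> e; have := mv_ij hA; have := mv_ij hB.
  move=> /andP[/andP[iB jB] _] /andP[/andP[iA jA] ij].
  rewrite -(setD1K iA) -(setD1K iB).
  have eA : A :\ i = (j |: (A :\ i)) :\ j by rewrite setU1K // !inE negb_and negbK jA orbT.
  have eB : B :\ i = (j |: (B :\ i)) :\ j by rewrite setU1K // !inE negb_and negbK jB orbT.
  by rewrite eA eB e.
- by move=> e; move: hA; rewrite /mv e BF !andbF.
- by move=> e; move: hB; rewrite /mv -e AF !andbF.
Qed.

Lemma SF_swise i j F t : swise_tintersecting s t F -> swise_tintersecting s t (SF i j F).
Proof.
move=> hsw G' hG'.
have [A hA] : exists A : 'I_s -> {set 'I_n}, forall l, A l \in F /\ G' l = sh i j F (A l).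
  apply: (@fin_all_exists 'I_s (fun _ => {set 'I_n}) (fun l B => B \in F /\ G' l = sh i j F B)) => l; have /imsetP [B BF ->] := hG' l; by exists B.
have AF : forall l, A l \in F by move=> l; case: (hA l).
have eG : G' = fun l => sh i j F (A l) by apply: FunctionalExtensionality.functional_extensionality => l; case: (hA l).
rewrite eG; clear eG hA hG' G'.
set I := \bigcap_(l < s) A l; set I' := \bigcap_(l < s) sh i j F (A l).
have hI := hsw A AF.
have memI' : forall y, y != i -> y != j -> (y \in I') = (y \in I).
  move=> y yi yj; apply/bigcapP/bigcapP => H l _; have := H l isT; by rewrite sh_mem.
case: (boolP [exists l, mv i j F (A l)]) => [/existsP [l1 ml1]|nomv]; last first.
  suff -> : I' = I by [].
  apply: eq_bigr => l _; rewrite /sh; case: ifP => // ml; move/negP: nomv; case.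
  by apply/existsP; exists l.
have /andP[/andP[iA1 jA1] ij] := mv_ij ml1.
have jI : j \notin I by apply/negP => /bigcapP /(_ l1 isT); rewrite (negbTE jA1).
case: (boolP (i \in I)) => iI; last first.
  apply: (leq_trans hI); apply: subset_leq_card; apply/subsetP => y yI.
  have yi : y != i by apply/negP => /eqP e; move: iI; rewrite -e yI.
  have yj : y != j by apply/negP => /eqP e; move: jI; rewrite -e yI.
  by rewrite memI'.
case: (boolP (j \in I')) => jI'.
  apply: (leq_trans hI).
  have -> : #|I| = #|j |: (I :\ i)|.
    by rewrite cardsU1 (cardsD1 i I) iI !inE negb_and negbK jI orbT add1n.
  apply: subset_leq_card; apply/subsetP => y; rewrite !inE => /orP[/eqP ->//|/andP[yi yI]].
  have yj : y != j by apply/negP => /eqP e; move: jI; rewrite -e yI.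
  by rewrite memI'.
have [l0 jl0] : exists l0, j \notin sh i j F (A l0).
  apply/existsP; rewrite -negb_forall; apply/negP => /forallP H; move: jI'.
  by move/negP; apply; apply/bigcapP => l _; apply: H.
have nml0 : ~~ mv i j F (A l0).
  apply/negP => ml0; move: jl0; by rewrite /sh ml0 setU11.
have jA0 : j \notin A l0 by move: jl0; rewrite /sh (negbTE nml0).
have iA0 : i \in A l0 by move/bigcapP: iI; apply.
have BF : j |: (A l0 :\ i) \in F by move: nml0; rewrite /mv iA0 jA0 /= negbK.
pose B l := if l == l0 then j |: (A l0 :\ i) else A l.
have hB : forall l, B l \in F by move=> l; rewrite /B; case: eqP.
have l10 : l1 != l0 by apply/eqP => e; move: nml0; rewrite -e ml1.
apply: (leq_trans (hsw B hB)); apply: subset_leq_card; apply/subsetP => y /bigcapP yB.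
have := yB l0 isT; rewrite /B eqxx !inE => /orP[/eqP yj|/andP[yi yA0]].
  by move: (yB l1 isT); rewrite /B (negbTE l10) yj (negbTE jA1).
have yj : y != j.
  by apply/negP => /eqP e; move: (yB l1 isT); rewrite /B (negbTE l10) e (negbTE jA1).
rewrite memI' //; apply/bigcapP => l _; have := yB l isT; rewrite /B.
by case: eqP => [->|].
Qed.


Definition Wt A := (\sum_(a in A) val a)%N.
Definition WF F := (\sum_(A in F) Wt A)%N.

Lemma Wt_sh (i j : 'I_n) F A : (i < j)%N -> (Wt A + (mv i j F A : nat) <= Wt (sh i j F A))%N.
Proof.
move=> ij; rewrite /sh; case: ifP => m; last by rewrite addn0.
have /andP[/andP[iA jA] _] := mv_ij m.
rewrite /Wt big_setU1 /=; last by rewrite !inE negb_and negbK jA orbT.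
rewrite (big_setD1 i iA) /= addnAC addn1 leq_add2r; exact: ij.
Qed.

Lemma WF_SF (i j : 'I_n) F : (i < j)%N -> (WF F <= WF (SF i j F))%N /\
  ((exists2 A, A \in F & mv i j F A) -> (WF F < WF (SF i j F))%N).
Proof.
move=> ij; rewrite /WF /SF big_imset /=; last exact: sh_inj.
split.
  apply: leq_sum => A _; apply: leq_trans (Wt_sh F A ij); exact: leq_addr.
case=> A AF m; rewrite (bigD1 A AF) [X in (_ < X)%N](bigD1 A AF) /=.
have h1 := Wt_sh F A ij; rewrite m in h1.
have h2 : (\sum_(B in F | B != A) Wt B <= \sum_(B in F | B != A) Wt (sh i j F B))%N.
  apply: leq_sum => B _; apply: leq_trans (Wt_sh F B ij); exact: leq_addr.
simpl in h1; rewrite addn1 in h1; exact: leq_trans (leq_add h1 h2).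
Qed.

Definition Nmax := (\sum_(A : {set 'I_n}) Wt A)%N.
Lemma WF_le F : (WF F <= Nmax)%N.
Proof.
rewrite /WF /Nmax big_mkcond /=; apply: leq_sum => A _; by case: ifP.
Qed.

End Comb.
Local Open Scope ring_scope.
Section Meas.
Variables (R : realType) (p : R) (n s : nat).
Implicit Types (F : {set {set 'I_n}}) (A B : {set 'I_n}).

Definition w k A : R := p ^+ #|A| * (1 - p) ^+ (k - #|A|).

Lemma card_bnd k A : (forall y : 'I_n, y \in A -> (y < k)%N) -> (#|A| <= k)%N.
Proof.
move=> hA; apply: (@leq_trans #|[set y : 'I_n | (y < k)%N]|).
  by apply: subset_leq_card; apply/subsetP => y yA; rewrite inE hA.
elim: k {hA} => [|k IH].
  by rewrite leqn0 cards_eq0; apply/eqP/setP => y; rewrite !inE.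
case: (ltnP k n) => kn.
  apply: (@leq_trans #|Ordinal kn |: [set y : 'I_n | (y < k)%N]|).
    apply: subset_leq_card; apply/subsetP => y; rewrite !inE ltnS leq_eqVlt.
    case/orP => [/eqP e|->]; last by rewrite orbT.
    by apply/orP; left; apply/eqP; apply: val_inj.
  rewrite cardsU1; case: (_ \notin _) => /=; [rewrite add1n ltnS|rewrite add0n; apply: leq_trans (leqnSn _)]; exact: IH.
apply: (leq_trans (max_card _)); rewrite card_ord; lia.
Qed.


Lemma ltk k (hk : (k < n)%N) (y : 'I_n) : (y < k.+1)%N -> y != Ordinal hk -> (y < k)%N.
Proof.
rewrite ltnS leq_eqVlt => /orP[/eqP e|//] /eqP []; exact: val_inj.
Qed.

Lemma main (a : R) : 0 <= p -> p <= 1 -> 0 <= a -> (1 - p) * a ^+ s + p <= a -> (0 < s)%N ->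
  forall k, (k <= n)%N -> forall F t, bnd k F -> shifted k F ->
  swise_tintersecting s t F -> \sum_(A in F) w k A <= a ^+ t.
Proof.
move=> p0 p1 a0 key hs; elim=> [|k IH] hk F t hb hsh hsw.
  have F0 : forall A, A \in F -> A = set0.
    move=> A AF; apply/setP => y; rewrite inE.
    by have := hb A AF y; case: (y \in A) => // /(_ isT).
  case: (boolP (set0 \in F)) => h0.
    have -> : F = [set set0].
      by apply/setP => A; rewrite inE; apply/idP/eqP => [/F0 //|->].
    rewrite big_set1 /w cards0 !expr0 mulr1.
    pose G := fun _ : 'I_s => (set0 : {set 'I_n}).
    have := hsw G (fun _ => h0).
    have -> : \bigcap_(i < s) G i = set0.
      apply/setP => y; rewrite inE; apply/negbTE/negP => /bigcapP H.
      by have := H (Ordinal hs) isT; rewrite inE.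
    by rewrite cards0 leqn0 => /eqP ->; rewrite expr0.
  have -> : F = set0.
    apply/setP => A; rewrite inE; apply/negbTE/negP => AF.
    by move: h0; rewrite -(F0 A AF) AF.
  by rewrite big_set0; apply: exprn_ge0.
have hk' : (k < n)%N by [].
set x := Ordinal hk'.
set F0 := [set A in F | x \notin A].
set F1 := [set B | (x |: B \in F) && (x \notin B)].
have spl : \sum_(A in F) w k.+1 A = (1 - p) * \sum_(A in F0) w k A + p * \sum_(B in F1) w k B.
  rewrite (bigID (fun A => x \in A)) /= addrC; congr (_ + _).
    rewrite big_distrr /=; apply: eq_big => [A|A]; first by rewrite !inE.
    move=> /andP[AF xA].
    have cA : (#|A| <= k)%N.
      apply: card_bnd => y yA; apply: ltk (hb A AF y yA) _.
      by apply/eqP => e; move: xA; rewrite /x -e yA.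
    by rewrite /w subSn // exprS mulrCA.
  have -> : \sum_(A in F | x \in A) w k.+1 A = \sum_(A in [set x |: B | B in F1]) w k.+1 A.
    apply: eq_bigl => A; apply/andP/imsetP => [[AF xA]|[B BF1 ->]].
      exists (A :\ x); last by rewrite setD1K.
      by rewrite inE setD1K // AF !inE eqxx.
    by move: BF1; rewrite inE => /andP[-> _]; rewrite setU11.
  rewrite big_imset /=; last first.
    move=> B C; rewrite !inE => /andP[_ xB] /andP[_ xC] e.
    by rewrite -(setU1K xB) -(setU1K xC) e.
  rewrite big_distrr /=; apply: eq_bigr => B; rewrite inE => /andP[_ xB].
  by rewrite /w cardsU1 xB add1n subSS exprS mulrA.
have bF0 : bnd k F0.
  move=> A; rewrite inE => /andP[AF xA] y yA; apply: ltk (hb A AF y yA) _.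
  by apply/eqP => e; move: xA; rewrite /x -e yA.
have bF1 : bnd k F1.
  move=> B; rewrite inE => /andP[BF xB] y yB.
  apply: ltk (hb _ BF y _) _; first by rewrite inE yB orbT.
  by apply/eqP => e; move: xB; rewrite /x -e yB.
have jx : forall j : 'I_n, (j < k)%N -> x != j.
  by move=> j jk; apply/eqP => e; move: jk; rewrite -e ltnn.
have sF0 : shifted k F0.
  move=> A; rewrite inE => /andP[AF xA] i j ij jk iA jA.
  rewrite inE hsh //; last exact: ltnW.
  by rewrite !inE negb_or jx // negb_and xA orbT.
have sF1 : shifted k F1.
  move=> B; rewrite inE => /andP[BF xB] i j ij jk iB jB.
  have ix : i != x by rewrite eq_sym jx //; apply: ltn_trans ij jk.
  have ij' : i != j by apply/eqP => e; move: ij; rewrite e ltnn.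
  have jnot : j \notin x |: B by rewrite !inE negb_or eq_sym jx.
  have := hsh _ BF i j ij (ltnW jk) (_ : i \in x |: B) jnot; rewrite ?inE ?iB ?orbT => /(_ isT).
  have -> : j |: ((x |: B) :\ i) = x |: (j |: B :\ i).
    apply/setP => y; rewrite !inE; case: (eqVneq y i) => [->|yi] /=.
      by rewrite (negbTE ix) (negbTE ij').
    by rewrite orbCA.
  by move=> H; rewrite H /= negb_or jx // negb_and xB orbT.
rewrite spl.
have q0 : 0 <= 1 - p by rewrite subr_ge0.
case: t hsw => [|t] hsw.
  have h0 := IH (ltnW hk) F0 0 bF0 sF0 (fun _ _ => leq0n _).
  have h1 := IH (ltnW hk) F1 0 bF1 sF1 (fun _ _ => leq0n _).
  rewrite expr0 in h0 h1 *.
  have := ler_wpM2l q0 h0; have := ler_wpM2l p0 h1; lra.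
have sw0 : swise_tintersecting s (t.+1 + s.-1) F0.
  move=> G hG.
  have hGF : forall i, G i \in F by move=> i; move: (hG i); rewrite inE => /andP[].
  apply: (@F0_claim n s k hk' F t.+1 hb hsh hsw isT s.-1 G hGF).
  rewrite prednK // -[RHS]card_ord; apply: eq_card => i; rewrite !inE.
  by move: (hG i); rewrite inE => /andP[].
have sw1 : swise_tintersecting s t F1.
  move=> G hG.
  pose G2 i := x |: G i.
  have hG2 : forall i, G2 i \in F by move=> i; move: (hG i); rewrite inE => /andP[].
  have := hsw G2 hG2.
  have sub : \bigcap_(i < s) G2 i \subset x |: \bigcap_(i < s) G i.
    apply/subsetP => y /bigcapP yG; rewrite !inE; case: (eqVneq y x) => //= yx.
    apply/bigcapP => i _; move: (yG i isT); by rewrite !inE (negbTE yx).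
  move=> h; have := leq_trans h (subset_leq_card sub).
  have hle : (#|x |: \bigcap_(i < s) G i| <= (#|\bigcap_(i < s) G i|).+1)%N by rewrite cardsU1; case: (_ \notin _).
  move: hle; lia.
have h0 := IH (ltnW hk) F0 _ bF0 sF0 sw0.
have h1 := IH (ltnW hk) F1 _ bF1 sF1 sw1.
have e : (t.+1 + s.-1 = t + s)%N by rewrite addSn -addnS prednK.
rewrite e exprD in h0.
have at0 : 0 <= a ^+ t by apply: exprn_ge0.
have := ler_wpM2l q0 h0; have := ler_wpM2l p0 h1.
have := ler_wpM2l at0 key.
rewrite exprS; nra.
Qed.

End Meas.

Section Final.
Variables (R : realType).

Lemma bern (d : R) m : 0 <= d -> 1 + m%:R * d <= (1 + d) ^+ m.
Proof.
move=> d0; elim: m => [|m IH]; first by rewrite mul0r addr0 expr0.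
rewrite exprS -natr1.
have h : 0 <= (1 + d) by lra.
have := ler_wpM2l h IH.
have : 0 <= m%:R * d * d by apply: mulr_ge0 => //; apply: mulr_ge0.
nra.
Qed.

Lemma Lbound (d : R) m : 0 <= d -> d <= 1 -> (1 - d) ^+ m * (1 + m%:R * d) <= 1.
Proof.
move=> d0 d1.
have h1 : (1 - d) ^+ m * (1 + d) ^+ m <= 1.
  rewrite -exprMn; apply: exprn_ile1; nra.
have h2 : 0 <= (1 - d) ^+ m by apply: exprn_ge0; lra.
have := ler_wpM2l h2 (bern m d0); lra.
Qed.

Lemma reduce (p a : R) n s t : 0 <= p -> p <= 1 -> 0 <= a -> (1 - p) * a ^+ s + p <= a -> (0 < s)%N ->
  forall F : {set {set 'I_n}}, swise_tintersecting s t F -> \sum_(A in F) w p n A <= a ^+ t.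
Proof.
move=> p0 p1 a0 key hs.
suff H : forall m (F : {set {set 'I_n}}), (Nmax n - WF F < m)%N ->
    swise_tintersecting s t F -> \sum_(A in F) w p n A <= a ^+ t.
  by move=> F; apply: (H (Nmax n - WF F).+1).
elim=> [//|m IH] F hm hsw.
case: (boolP [exists A, (A \in F) && [exists i : 'I_n, [exists j : 'I_n, ((i < j)%N && mv i j F A)]]]).
  move=> /existsP [A /andP[AF /existsP [i /existsP [j /andP[ij mA]]]]].
  have [_ hlt] := WF_SF F ij.
  have h1 := hlt (ex_intro2 _ _ A AF mA).
  have h2 := WF_le (SF i j F).
  have -> : \sum_(A in F) w p n A = \sum_(B in SF i j F) w p n B.
    rewrite /SF big_imset /=; last exact: sh_inj.
    by apply: eq_bigr => B _; rewrite /w sh_card.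
  apply: IH; last exact: SF_swise.
  move: hm h1 h2; lia.
move=> hno.
have hb : bnd n F by move=> A _ y _; apply: ltn_ord.
have hsh : shifted n F; last exact: (main p0 p1 a0 key hs (leqnn n) hb hsh hsw).
move=> A AF i j ij _ iA jA.
case: (boolP (j |: (A :\ i) \in F)) => // h; exfalso.
move/negP: hno; apply; apply/existsP; exists A; rewrite AF /=.
apply/existsP; exists i; apply/existsP; exists j; by rewrite ij /mv iA jA h.
Qed.

End Final.

Theorem lemma2p3 (R : realType) (eps : R) (s : nat) (p : R) :
  0 < eps -> (2 <= s)%N -> 0 < p -> p < (s.-1)%:R / s%:R ->
  exists t : nat, forall (n : nat) (F : {set {set 'I_n}}),
    swise_tintersecting s t F -> mu p F < eps.
Proof.
move=> e0 hs2 p0 hp.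
have hs : (0 < s)%N by apply: leq_trans hs2.
set r : R := s%:R.
have r0 : 0 < r by rewrite /r ltr0n.
have er : (s.-1)%:R = r - 1 by rewrite /r -[in RHS](prednK hs) -natr1 addrK.
rewrite er in hp.
have hpr : p * r < r - 1 by rewrite -ltr_pdivlMr.
set ri := r^-1.
have rri : r * ri = 1 by rewrite /ri mulfV // gt_eqF.
have ri0 : 0 < ri by rewrite /ri invr_gt0.
set d := 1 - p - ri.
have d0 : 0 < d.
  rewrite /d; have : p * r + 1 < r by lra.
  move=> h; have : (p * r + 1) * ri < r * ri by rewrite ltr_pM2r.
  rewrite mulrDl -mulrA rri mulr1 mul1r; lra.
have d1 : d <= 1 by rewrite /d; lra.
set a := 1 - d.
have a0 : 0 <= a by rewrite /a /d; lra.
have p1 : p <= 1 by rewrite /d in d0; lra.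
have key : (1 - p) * a ^+ s + p <= a.
  have h1 := Lbound s (ltW d0) d1.
  have e1 : 1 + s%:R * d = r * (1 - p).
    by rewrite -/r /d !mulrBr rri mulr1; lra.
  rewrite -/a e1 in h1.
  have h2 : (1 - p) * a ^+ s = (a ^+ s * (r * (1 - p))) * ri.
    have -> : (a ^+ s * (r * (1 - p))) * ri = (1 - p) * a ^+ s * (r * ri) by ring.
    by rewrite rri mulr1.
  have h3 : (a ^+ s * (r * (1 - p))) * ri <= 1 * ri by rewrite ler_pM2r.
  rewrite /a /d; rewrite /a /d in h2 h3; lra.
set z := (eps * d)^-1.
have z0 : 0 <= z by rewrite /z invr_ge0; apply: mulr_ge0; lra.
exists (Num.Def.archi_bound z) => n F hsw.
set t := Num.Def.archi_bound z.
have hz := archi_boundP z0; rewrite -/t in hz.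
have hmu : mu p F <= a ^+ t.
  by apply: (reduce (ltW p0) p1 a0 key hs hsw).
apply: (le_lt_trans hmu).
have h1 := Lbound t (ltW d0) d1; rewrite -/a in h1.
have hzd : eps * (z * d) = 1.
  have en : eps != 0 by rewrite gt_eqF.
  have dn : d != 0 by rewrite gt_eqF.
  by rewrite mulrCA /z mulVf // mulf_neq0.
have h2 : z * d < t%:R * d by rewrite ltr_pM2r.
have h3 : eps * (z * d) < eps * (t%:R * d) by rewrite ltr_pM2l.
have h4 : 1 < eps * (1 + t%:R * d).
  rewrite hzd in h3; have : 0 <= t%:R * d by apply: mulr_ge0; [apply: ler0n | lra].
  nra.
have td0 : 0 <= t%:R * d by apply: mulr_ge0; [apply: ler0n | lra].
have h5 : 0 < 1 + t%:R * d by lra.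
rewrite -(ltr_pM2r h5); lra.
Qed.
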